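(* Let $\mathcal{P}$ be the set of paths of a $B_k$-EPG representation of a graph $G$ and let $P_1,P_2\in\mathcal{P}$. Then $P_1$ and $P_2$ edge-intersect if and only if $P_1\cap P_2$ contains at least one edge that is a relevant edge of $P_1$ or of $P_2$.
   Context: A grid is the set of integer points of the plane; a grid edge joins two grid points at distance $1$. A path in the grid is a sequence of distinct grid edges in which consecutive edges share exactly one grid point and non-consecutive edges share none; a bend is a pair of consecutive edges with different directions (horizontal/vertical), these being called bend edges. The first and last edges of a path are its extremity edges; the relevant edges of a path are its extremity edges and bend edges. Two paths edge-intersect if they share a grid edge. An EPG representation of $G$ is a family $(P_v)_{v\in V(G)}$ of grid paths such that distinct $u,v$ are adjacent iff $P_u,P_v$ share a grid edge; it is $B_k$-EPG if every path has at most $k$ bends. *)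

(* Defs.v *)
From Stdlib Require Import ZArith List Bool.
Import ListNotations.
Open Scope Z_scope.

Definition gpoint : Type := (Z * Z)%type.

(* A grid edge, encoded canonically by its lower/left endpoint (gx, gy) and
   its direction: horizontal edges join (gx,gy)-(gx+1,gy), vertical edges
   join (gx,gy)-(gx,gy+1).  These are exactly the unordered pairs of grid
   points at distance 1, each represented once. *)
Record gedge : Type := GEdge { gx : Z; gy : Z; horiz : bool }.

Definition endpoint (e : gedge) (p : gpoint) : Prop :=
  p = (gx e, gy e) \/
  p = (if horiz e then (gx e + 1, gy e) else (gx e, gy e + 1)).

Definition share_point (e f : gedge) : Prop :=
  exists p, endpoint e p /\ endpoint f p.

Definition share_exactly_one (e f : gedge) : Prop :=
  exists p, endpoint e p /\ endpoint f p /\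
    forall q, endpoint e q -> endpoint f q -> q = p.

Definition dummy_edge : gedge := GEdge 0 0 true.

Definition is_grid_path (l : list gedge) : Prop :=
  l <> [] /\ NoDup l /\
  (forall i, (S i < length l)%nat ->
     share_exactly_one (nth i l dummy_edge) (nth (S i) l dummy_edge)) /\
  (forall i j, (S i < j)%nat -> (j < length l)%nat ->
     ~ share_point (nth i l dummy_edge) (nth j l dummy_edge)).

Definition is_bend_at (l : list gedge) (i : nat) : bool :=
  Nat.ltb (S i) (length l) &&
  negb (Bool.eqb (horiz (nth i l dummy_edge)) (horiz (nth (S i) l dummy_edge))).

Definition nbends (l : list gedge) : nat :=
  length (filter (is_bend_at l) (seq 0 (length l))).

Definition relevant_edge (l : list gedge) (e : gedge) : Prop :=
  In e l /\
  (e = nth 0 l dummy_edge \/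
   e = nth (pred (length l)) l dummy_edge \/
   exists i, is_bend_at l i = true /\
             (e = nth i l dummy_edge \/ e = nth (S i) l dummy_edge)).

Definition edge_intersect (l1 l2 : list gedge) : Prop :=
  exists e, In e l1 /\ In e l2.

Definition finite_simple_graph (V : Type) (adj : V -> V -> Prop) : Prop :=
  (exists enum : list V, forall v, In v enum) /\
  (forall u v, adj u v -> adj v u) /\
  (forall v, ~ adj v v).

Definition Bk_EPG_rep (k : nat) (V : Type) (adj : V -> V -> Prop)
    (P : V -> list gedge) : Prop :=
  (forall v, is_grid_path (P v)) /\
  (forall v, (nbends (P v) <= k)%nat) /\
  (forall u v, u <> v -> (adj u v <-> edge_intersect (P u) (P v))).

(* Main.v *)
Require Import Defs.
From Stdlib Require Import ZArith List Bool Lia Arith.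
Import ListNotations.

Definition nL (f : gedge) : gedge :=
  if horiz f then GEdge (gx f - 1) (gy f) true else GEdge (gx f) (gy f - 1) false.
Definition nR (f : gedge) : gedge :=
  if horiz f then GEdge (gx f + 1) (gy f) true else GEdge (gx f) (gy f + 1) false.

Lemma nbr (f g : gedge) p : horiz g = horiz f -> endpoint f p -> endpoint g p ->
  g <> f -> g = nL f \/ g = nR f.
Proof.
  destruct f as [a b h], g as [x y h']; simpl; intros Hh H1 H2 Hne; subst h'.
  unfold endpoint, nL, nR in *; simpl in *.
  destruct h; destruct H1 as [H1|H1]; destruct H2 as [H2|H2]; subst p;
  injection H2; intros; subst;
  first [ exfalso; apply Hne; f_equal; lia | left; f_equal; lia | right; f_equal; lia ].
Qed.

Lemma nLR (f : gedge) : nL f <> nR f.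
Proof.
  destruct f as [a b h]; unfold nL, nR; simpl; destruct h; intro H; injection H; lia.
Qed.

Lemma bend_false l i : (S i < length l)%nat -> is_bend_at l i = false ->
  horiz (nth i l dummy_edge) = horiz (nth (S i) l dummy_edge).
Proof.
  unfold is_bend_at; intros Hl H.
  apply Nat.ltb_lt in Hl; rewrite Hl in H; simpl in H.
  apply Bool.eqb_prop. destruct (Bool.eqb _ _); simpl in *; congruence.
Qed.

Lemma nodup_ne l i j : NoDup l -> (i < length l)%nat -> (j < length l)%nat -> i <> j ->
  nth i l dummy_edge <> nth j l dummy_edge.
Proof.
  intros Hn Hi Hj Hij He. apply Hij.
  apply (proj1 (NoDup_nth l dummy_edge) Hn); auto.
Qed.

Lemma walk l1 l2 : is_grid_path l1 -> is_grid_path l2 ->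
  forall j, (j < length l1)%nat -> In (nth j l1 dummy_edge) l2 ->
  exists e, In e l1 /\ In e l2 /\ (relevant_edge l1 e \/ relevant_edge l2 e).
Proof.
  intros [Hne1 [Hnd1 [Hc1 _]]] [Hne2 [Hnd2 [Hc2 _]]].
  induction j as [|j IH]; intros Hj Hin.
  - exists (nth 0 l1 dummy_edge); split; [apply nth_In; auto|split; auto].
    left; split; [apply nth_In; auto|auto].
  - set (f := nth (S j) l1 dummy_edge) in *.
    assert (Hf1 : In f l1) by (apply nth_In; auto).
    destruct (Nat.eq_dec (S j) (pred (length l1))) as [E|E].
    { exists f; split; [auto|split; [auto|]]. left; split; [auto|]. right; left; subst f; rewrite E; auto. }
    destruct (is_bend_at l1 j) eqn:B1.
    { exists f; split; [auto|split; [auto|]]. left; split; [auto|]. right; right; exists j; auto. }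
    destruct (is_bend_at l1 (S j)) eqn:B2.
    { exists f; split; [auto|split; [auto|]]. left; split; [auto|]. right; right; exists (S j); auto. }
    destruct (In_nth l2 f dummy_edge Hin) as [m [Hm Hmf]].
    destruct m as [|m'].
    { exists f; split; [auto|split; [auto|]]. right; split; [auto|]. left; auto. }
    destruct (Nat.eq_dec (S m') (pred (length l2))) as [E2|E2].
    { exists f; split; [auto|split; [auto|]]. right; split; [auto|]. right; left; rewrite <- E2; auto. }
    destruct (is_bend_at l2 m') eqn:C1.
    { exists f; split; [auto|split; [auto|]]. right; split; [auto|]. right; right; exists m'; auto. }
    destruct (is_bend_at l2 (S m')) eqn:C2.
    { exists f; split; [auto|split; [auto|]]. right; split; [auto|]. right; right; exists (S m'); auto. }
    apply IH; [lia|].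
    set (g := nth j l1 dummy_edge).
    set (a := nth m' l2 dummy_edge).
    set (b := nth (S (S m')) l2 dummy_edge).
    assert (HgL : g = nL f \/ g = nR f).
    { destruct (Hc1 j ltac:(lia)) as [p [P1 [P2 _]]].
      apply (nbr f g p); auto.
      - apply bend_false; auto.
      - apply nodup_ne; auto; lia. }
    assert (HaL : a = nL f \/ a = nR f).
    { destruct (Hc2 m' ltac:(lia)) as [p [P1 [P2 _]]].
      rewrite Hmf in P2.
      apply (nbr f a p); auto.
      - unfold a; rewrite <- Hmf; apply bend_false; auto.
      - rewrite <- Hmf; apply nodup_ne; auto; lia. }
    assert (HbL : b = nL f \/ b = nR f).
    { destruct (Hc2 (S m') ltac:(lia)) as [p [P1 [P2 _]]].
      rewrite Hmf in P1.
      apply (nbr f b p); auto.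
      - unfold b; rewrite <- Hmf; symmetry; apply bend_false; auto; lia.
      - rewrite <- Hmf; apply nodup_ne; auto; lia. }
    assert (Hab : a <> b) by (apply nodup_ne; auto; lia).
    assert (Ha : In a l2) by (apply nth_In; lia).
    assert (Hb : In b l2) by (apply nth_In; lia).
    destruct HgL as [G|G], HaL as [A|A], HbL as [B|B]; rewrite G;
      first [ rewrite <- A; exact Ha | rewrite <- B; exact Hb | exfalso; apply Hab; congruence ].
Qed.

Theorem lemma3p2 (k : nat) (V : Type) (adj : V -> V -> Prop)
  (P : V -> list gedge) :
  finite_simple_graph V adj ->
  Bk_EPG_rep k V adj P ->
  forall u v : V,
    edge_intersect (P u) (P v) <->
    exists e, In e (P u) /\ In e (P v) /\
              (relevant_edge (P u) e \/ relevant_edge (P v) e).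
Proof.
  intros _ [Hp _] u v; split.
  - intros [e [H1 H2]].
    destruct (In_nth _ _ dummy_edge H1) as [j [Hj He]].
    apply (walk (P u) (P v) (Hp u) (Hp v) j Hj). rewrite He; auto.
  - intros [e [H1 [H2 _]]]; exists e; auto.
Qed.
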